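(* Let $\mathcal{D}$ be a triangulated category with small coproducts and let $T_1,T_2$ be exceptional objects satisfying (A1) $\operatorname{Hom}_{\mathcal{D}}(T_1,T_2[k])=0$ for all $k\in\mathbb{Z}$ and (A2) $\operatorname{Hom}_{\mathcal{D}}(T_2,T_1[k])=0$ for all $k\in\mathbb{Z}\setminus\{0,1\}$. Let $\alpha:T_2\to T_1[1]$ be a morphism and $T_1\to T\to T_2\xrightarrow{\alpha}T_1[1]$ a triangle. Then: (1) $T\oplus T_2$ is exceptional if and only if $\alpha$ is left-universal; (2) $T\oplus T_1$ is exceptional if and only if $\alpha$ is right-universal.
   Context: An object $T$ is exceptional if $\operatorname{Hom}_{\mathcal{D}}(T,T[k])=0$ for all $k\neq0$. A morphism $\alpha:M\to N$ is left-universal if the map $\operatorname{End}_{\mathcal{D}}(M)\to\operatorname{Hom}_{\mathcal{D}}(M,N)$, $h\mapsto\alpha\circ h$, is surjective, and right-universal if the map $\operatorname{End}_{\mathcal{D}}(N)\to\operatorname{Hom}_{\mathcal{D}}(M,N)$, $h\mapsto h\circ\alpha$, is surjective. *)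

(* Defs.v *)
From HB Require Import structures.
From mathcomp Require Import all_boot all_order all_algebra.
Set Implicit Arguments. Unset Strict Implicit. Unset Printing Implicit Defensive.
Import GRing.Theory.
Local Open Scope ring_scope.

Record additive := Additive {
  Obj : Type;
  Mor : Obj -> Obj -> zmodType;
  idm : forall a, Mor a a;
  comp : forall a b c, Mor b c -> Mor a b -> Mor a c;
  compA : forall a b c d (h : Mor c d) (g : Mor b c) (f : Mor a b),
      comp h (comp g f) = comp (comp h g) f;
  comp1m : forall a b (f : Mor a b), comp (idm b) f = f;
  compm1 : forall a b (f : Mor a b), comp f (idm a) = f;
  compDl : forall a b c (g1 g2 : Mor b c) (f : Mor a b),
      comp (g1 + g2) f = comp g1 f + comp g2 f;
  compDr : forall a b c (g : Mor b c) (f1 f2 : Mor a b),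
      comp g (f1 + f2) = comp g f1 + comp g f2;
  zobj : Obj;
  zobj_in : forall a (f : Mor a zobj), f = 0;
  zobj_out : forall a (f : Mor zobj a), f = 0;
  biprod_ex : forall a b, exists (p : Obj) (i1 : Mor a p) (i2 : Mor b p)
      (p1 : Mor p a) (p2 : Mor p b),
      [/\ comp p1 i1 = idm a, comp p2 i2 = idm b, comp p1 i2 = 0,
          comp p2 i1 = 0 & comp i1 p1 + comp i2 p2 = idm p]
}.
Arguments Mor {C} : rename.
Arguments idm {C} a : rename.
Arguments comp {C a b c} : rename.
Arguments zobj {C} : rename.

Section Notions.
Variable C : additive.

Definition is_iso (a b : Obj C) (u : Mor a b) :=
  exists v : Mor b a, comp u v = idm b /\ comp v u = idm a.

Definition is_biprod (a b P : Obj C) (i1 : Mor a P) (i2 : Mor b P)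
    (p1 : Mor P a) (p2 : Mor P b) :=
  [/\ comp p1 i1 = idm a, comp p2 i2 = idm b, comp p1 i2 = 0,
      comp p2 i1 = 0 & comp i1 p1 + comp i2 p2 = idm P].

Definition has_small_coproducts :=
  forall (I : Type) (F : I -> Obj C), exists (P : Obj C) (inj : forall i, Mor (F i) P),
    forall (Y : Obj C) (phi : forall i, Mor (F i) Y),
      exists! phi' : Mor P Y, forall i, comp phi' (inj i) = phi i.

Definition left_universal (M N : Obj C) (alpha : Mor M N) :=
  forall beta : Mor M N, exists h : Mor M M, comp alpha h = beta.

Definition right_universal (M N : Obj C) (alpha : Mor M N) :=
  forall beta : Mor M N, exists h : Mor N N, comp h alpha = beta.
End Notions.

Record shift (C : additive) := Shift {
  sh : Obj C -> Obj C;
  shm : forall a b, Mor a b -> Mor (sh a) (sh b);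
  shm1 : forall a, shm (idm a) = idm (sh a);
  shmM : forall a b c (g : Mor b c) (f : Mor a b),
      shm (comp g f) = comp (shm g) (shm f);
  shmD : forall a b (f g : Mor a b), shm (f + g) = shm f + shm g;
  shm_bij : forall a b, bijective (@shm a b);
  sh_esurj : forall b, exists a (u : Mor (sh a) b), is_iso u
}.
Arguments sh {C} s.
Arguments shm {C} s {a b}.

Record triangle (C : additive) (s : Obj C -> Obj C) := Tri {
  tX : Obj C; tY : Obj C; tZ : Obj C;
  tf : Mor tX tY; tg : Mor tY tZ; th : Mor tZ (s tX) }.
Arguments Tri {C s tX tY tZ} tf tg th.

Record triangulated (C : additive) := Triangulated {
  Sh : shift C;
  dist : @triangle C (sh Sh) -> Prop;
  tr_id : forall a : Obj C, dist (Tri (idm a) (0 : Mor a zobj) (0 : Mor zobj (sh Sh a)));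
  tr_iso : forall (X Y Z X' Y' Z' : Obj C) (f : Mor X Y) (g : Mor Y Z) (h : Mor Z (sh Sh X))
      (f' : Mor X' Y') (g' : Mor Y' Z') (h' : Mor Z' (sh Sh X'))
      (u : Mor X X') (v : Mor Y Y') (w : Mor Z Z'),
      is_iso u -> is_iso v -> is_iso w ->
      comp v f = comp f' u -> comp w g = comp g' v -> comp (shm Sh u) h = comp h' w ->
      dist (Tri f g h) -> dist (Tri f' g' h');
  tr_ext : forall (X Y : Obj C) (f : Mor X Y),
      exists (Z : Obj C) (g : Mor Y Z) (h : Mor Z (sh Sh X)), dist (Tri f g h);
  tr_rot : forall (X Y Z : Obj C) (f : Mor X Y) (g : Mor Y Z) (h : Mor Z (sh Sh X)),
      dist (Tri f g h) -> dist (Tri g h (- shm Sh f));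
  tr_mor : forall (X Y Z X' Y' Z' : Obj C) (f : Mor X Y) (g : Mor Y Z) (h : Mor Z (sh Sh X))
      (f' : Mor X' Y') (g' : Mor Y' Z') (h' : Mor Z' (sh Sh X'))
      (u : Mor X X') (v : Mor Y Y'),
      dist (Tri f g h) -> dist (Tri f' g' h') -> comp v f = comp f' u ->
      exists w : Mor Z Z', comp w g = comp g' v /\ comp (shm Sh u) h = comp h' w;
  tr_oct : forall (X Y Z Z' X' Y' : Obj C) (f : Mor X Y) (g : Mor Y Z)
      (h : Mor Y Z') (i1 : Mor Z' (sh Sh X))
      (k : Mor Z X') (i2 : Mor X' (sh Sh Y))
      (l : Mor Z Y') (i3 : Mor Y' (sh Sh X)),
      dist (Tri f h i1) -> dist (Tri g k i2) -> dist (Tri (comp g f) l i3) ->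
      exists (a : Mor Z' Y') (b : Mor Y' X'),
        [/\ comp a h = comp l g, comp i3 a = i1, comp b l = k,
            comp i2 b = comp (shm Sh f) i3 &
            dist (Tri a b (comp (shm Sh h) i2))]
}.
Arguments Sh {C} t : rename.
Arguments dist {C} t : rename.

Section Shifted.
Variables (C : additive) (D : triangulated C).

Definition shiftn (n : nat) (X : Obj C) : Obj C := iter n (sh (Sh D)) X.

(* Mor(X, Y[k]) for k : int; for k = -(n+1) this is Mor(X[n+1], Y),
   which is canonically isomorphic since the shift is an equivalence. *)
Definition homk (X Y : Obj C) (k : int) : zmodType :=
  match k with
  | Posz n => Mor X (shiftn n Y)
  | Negz n => Mor (shiftn n.+1 X) Y
  end.

Definition exceptional (T : Obj C) :=
  forall k : int, k != 0 -> forall x : homk T T k, x = 0.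
End Shifted.

(* Main.v *)
From Pilot Require Import Defs.
From HB Require Import structures.
From mathcomp Require Import all_boot all_order all_algebra.
Set Implicit Arguments. Unset Strict Implicit. Unset Printing Implicit Defensive.
Import GRing.Theory.
Local Open Scope ring_scope.

Local Notation comp := Defs.comp.
Local Notation compA := Defs.compA.
Section S.
Variables (C : Defs.additive) (D : triangulated C).
Local Notation sf := (sh (Sh D)).
Local Notation sm := (shm (Sh D)).

Lemma comp0m (a b c : Obj C) (f : Mor a b) : comp (0 : Mor b c) f = 0.
Proof. apply: (addrI (comp (0 : Mor b c) f)); by rewrite -compDl !addr0. Qed.
Lemma compm0 (a b c : Obj C) (g : Mor b c) : comp g (0 : Mor a b) = 0.
Proof. apply: (addrI (comp g (0 : Mor a b))); by rewrite -compDr !addr0. Qed.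
Lemma compNm (a b c : Obj C) (g : Mor b c) (f : Mor a b) : comp (- g) f = - comp g f.
Proof. apply: (addrI (comp g f)); by rewrite -compDl !subrr comp0m. Qed.
Lemma compmN (a b c : Obj C) (g : Mor b c) (f : Mor a b) : comp g (- f) = - comp g f.
Proof. apply: (addrI (comp g f)); by rewrite -compDr !subrr compm0. Qed.
Lemma sm0 (a b : Obj C) : sm (0 : Mor a b) = 0.
Proof. apply: (addrI (sm (0 : Mor a b))); by rewrite -shmD !addr0. Qed.

Lemma tri_zero (X Y Z : Obj C) (f : Mor X Y) (g : Mor Y Z) (h : Mor Z (sf X)) :
  dist D (Tri f g h) -> comp g f = 0.
Proof.
move=> H.
have [w [Hw _]] := tr_mor (tr_id D X) H (erefl : comp f (idm X) = comp f (idm X)).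
by rewrite -Hw compm0.
Qed.

Lemma tri_rot3 (X Y Z : Obj C) (f : Mor X Y) (g : Mor Y Z) (h : Mor Z (sf X)) :
  dist D (Tri f g h) -> dist D (Tri (- sm f) (- sm g) (- sm h)).
Proof. by move=> H; do 3 apply: tr_rot. Qed.

Lemma tri_shift n (X Y Z : Obj C) (f : Mor X Y) (g : Mor Y Z) (h : Mor Z (sf X)) :
  dist D (Tri f g h) ->
  exists (f' : Mor (shiftn D n X) (shiftn D n Y)) (g' : Mor (shiftn D n Y) (shiftn D n Z))
    (h' : Mor (shiftn D n Z) (sf (shiftn D n X))), dist D (Tri f' g' h').
Proof.
move=> H; elim: n => [|n [f' [g' [h' IH]]]]; first by exists f, g, h.
by exists (- sm f'), (- sm g'), (- sm h'); apply: tri_rot3.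
Qed.

Lemma sm_inj (a b : Obj C) (x y : Mor a b) : sm x = sm y -> x = y.
Proof. by case: (shm_bij (Sh D) a b) => inv H1 H2; move=> E; rewrite -(H1 x) -(H1 y) E. Qed.
Lemma sm_surj (a b : Obj C) (w : Mor (sf a) (sf b)) : exists x : Mor a b, sm x = w.
Proof. by case: (shm_bij (Sh D) a b) => inv H1 H2; exists (inv w). Qed.

Lemma cov (X Y Z W : Obj C) (f : Mor X Y) (g : Mor Y Z) (h : Mor Z (sf X)) (phi : Mor W Y) :
  dist D (Tri f g h) -> comp g phi = 0 -> exists psi : Mor W X, comp f psi = phi.
Proof.
move=> H Hg.
have Hc : comp (0 : Mor zobj Z) (0 : Mor W zobj) = comp g phi by rewrite comp0m Hg.
have [w [_ Hw]] := tr_mor (tr_rot (tr_id D W)) (tr_rot H) Hc.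
rewrite shm1 compmN compm1 compNm in Hw.
have {}Hw := oppr_inj Hw.
have [psi Hpsi] := sm_surj w.
by exists psi; apply: sm_inj; rewrite shmM Hpsi.
Qed.

Lemma contra (X Y Z W : Obj C) (f : Mor X Y) (g : Mor Y Z) (h : Mor Z (sf X)) (phi : Mor Y W) :
  dist D (Tri f g h) -> comp phi f = 0 -> exists psi : Mor Z W, comp psi g = phi.
Proof.
move=> H Hf.
have Hc : comp (sm phi) (- sm f) = comp (0 : Mor zobj (sf W)) (0 : Mor (sf X) zobj).
  by rewrite compmN -shmM Hf sm0 oppr0 comp0m.
have [w [Hw _]] := tr_mor (tri_rot3 H) (tr_rot (tr_rot (tr_id D W))) Hc.
rewrite compmN compNm shm1 comp1m in Hw.
have {}Hw := oppr_inj Hw.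
have [psi Hpsi] := sm_surj w.
by exists psi; apply: sm_inj; rewrite shmM Hpsi.
Qed.


Fixpoint shmn (n : nat) (a b : Obj C) (f : Mor a b) {struct n} :
  Mor (shiftn D n a) (shiftn D n b) :=
  match n return Mor (shiftn D n a) (shiftn D n b) with
  | 0 => f
  | m.+1 => sm (shmn m f)
  end.

Lemma shmnM n (a b c : Obj C) (g : Mor b c) (f : Mor a b) :
  shmn n (comp g f) = comp (shmn n g) (shmn n f).
Proof. by elim: n => [|n IH] //=; rewrite IH shmM. Qed.
Lemma shmnD n (a b : Obj C) (f g : Mor a b) : shmn n (f + g) = shmn n f + shmn n g.
Proof. by elim: n => [|n IH] //=; rewrite IH shmD. Qed.
Lemma shmn1 n (a : Obj C) : shmn n (idm a) = idm _.
Proof. by elim: n => [|n IH] //=; rewrite IH shm1. Qed.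

Definition van (X Y : Obj C) :=
  (forall n, (0 < n)%N -> forall x : Mor X (shiftn D n Y), x = 0) /\
  (forall n (x : Mor (shiftn D n.+1 X) Y), x = 0).

Lemma mid4 (a b c d e f : Obj C) (u : Mor b a) (v : Mor c b) (x : Mor d c) (w : Mor e d)
  (z : Mor f e) : comp (comp u v) (comp x (comp w z)) = comp u (comp (comp v (comp x w)) z).
Proof. by rewrite !compA. Qed.

Lemma biprod_exc (A B P : Obj C) (i1 : Mor A P) (i2 : Mor B P) (p1 : Mor P A) (p2 : Mor P B) :
  is_biprod i1 i2 p1 p2 -> van A A -> van A B -> van B A -> van B B -> exceptional D P.
Proof.
move=> [h11 h22 h12 h21 hid] [VAA1 VAA2] [VAB1 VAB2] [VBA1 VBA2] [VBB1 VBB2].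
case=> [n|n] hk /= x.
- have hn : (0 < n)%N by rewrite lt0n; move: hk; rewrite eqz_nat.
  have -> : x = comp (shmn n (comp i1 p1 + comp i2 p2)) (comp x (comp i1 p1 + comp i2 p2)).
    by rewrite hid shmn1 comp1m compm1.
  rewrite shmnD !shmnM !compDl !compDr !mid4.
  rewrite (VAA1 n hn (comp (shmn n p1) (comp x i1))) (VBA1 n hn (comp (shmn n p1) (comp x i2))).
  rewrite (VAB1 n hn (comp (shmn n p2) (comp x i1))) (VBB1 n hn (comp (shmn n p2) (comp x i2))).
  by rewrite !comp0m !compm0 !addr0.
- have -> : x = comp (comp i1 p1 + comp i2 p2) (comp x (shmn n.+1 (comp i1 p1 + comp i2 p2))).
    by rewrite hid shmn1 comp1m compm1.
  rewrite shmnD !shmnM !compDl !compDr !mid4.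
  rewrite (VAA2 n (comp p1 (comp x (shmn n.+1 i1)))) (VBA2 n (comp p1 (comp x (shmn n.+1 i2)))).
  rewrite (VAB2 n (comp p2 (comp x (shmn n.+1 i1)))) (VBB2 n (comp p2 (comp x (shmn n.+1 i2)))).
  by rewrite !comp0m !compm0 !addr0.
Qed.

Lemma exc_van (X : Obj C) : exceptional D X -> van X X.
Proof.
move=> E; split=> [n hn x|n x]; last exact: (E (Negz n) erefl x).
by apply: (E (Posz n) _ x); rewrite eqz_nat -lt0n.
Qed.

Lemma exc_comp (P X Y : Obj C) (i : Mor X P) (p : Mor P X) (j : Mor Y P) (q : Mor P Y) :
  comp p i = idm X -> comp q j = idm Y -> exceptional D P -> forall y : Mor Y (sf X), y = 0.
Proof.
move=> hi hj E y.
have H0 : comp (sm i) (comp y q) = 0 by apply: (E (Posz 1) erefl).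
have -> : y = comp (sm p) (comp (comp (sm i) (comp y q)) j).
  by rewrite !compA -shmM hi shm1 comp1m -compA hj compm1.
by rewrite H0 comp0m compm0.
Qed.

Lemma sand_cov (A X Y Z : Obj C) (f : Mor X Y) (g : Mor Y Z) (h : Mor Z (sf X)) :
  dist D (Tri f g h) -> (forall x : Mor A X, x = 0) -> (forall x : Mor A Z, x = 0) ->
  forall x : Mor A Y, x = 0.
Proof.
move=> H HX HZ x; have [psi <-] := cov H (HZ (comp g x)).
by rewrite (HX psi) compm0.
Qed.

Lemma sand_contra (A X Y Z : Obj C) (f : Mor X Y) (g : Mor Y Z) (h : Mor Z (sf X)) :
  dist D (Tri f g h) -> (forall x : Mor X A, x = 0) -> (forall x : Mor Z A, x = 0) ->
  forall x : Mor Y A, x = 0.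
Proof.
move=> H HX HZ x; have [psi <-] := contra H (HX (comp x f)).
by rewrite (HZ psi) comp0m.
Qed.

End S.

Import Pilot.Defs.
Unset Implicit Arguments.
Set Strict Implicit.

Theorem proposition2p2 (C : additive) (D : triangulated C)
  (Hcop : has_small_coproducts C) (T1 T2 : Obj C)
  (E1 : exceptional D T1) (E2 : exceptional D T2)
  (A1 : forall (k : int) (x : homk D T1 T2 k), x = 0)
  (A2 : forall k : int, k != 0 -> k != 1 -> forall x : homk D T2 T1 k, x = 0)
  (T : Obj C) (f : Mor T1 T) (g : Mor T T2) (alpha : Mor T2 (sh (Sh D) T1))
  (Htri : dist D (Tri f g alpha)) :
  (forall (P : Obj C) (i1 : Mor T P) (i2 : Mor T2 P) (p1 : Mor P T) (p2 : Mor P T2),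
      is_biprod i1 i2 p1 p2 -> (exceptional D P <-> left_universal alpha)) /\
  (forall (P : Obj C) (i1 : Mor T P) (i2 : Mor T1 P) (p1 : Mor P T) (p2 : Mor P T1),
      is_biprod i1 i2 p1 p2 -> (exceptional D P <-> right_universal alpha)).
Proof.
have Tr1 := tr_rot Htri.
have Tr2 := tr_rot Tr1.
have pnz : forall n, (0 < n)%N -> Posz n != 0.
  by move=> n hn; rewrite eqz_nat -lt0n.
have pn1 : forall n, (1 < n)%N -> Posz n != 1.
  by move=> n hn; rewrite eqz_nat; case: n hn => [|[|n]].
have pnz2 : forall n, (1 < n)%N -> Posz n != 0.
  by move=> n hn; rewrite eqz_nat; case: n hn => [|[|n]].
have Fb : forall n, (0 < n)%N -> forall x : Mor T (shiftn D n T2), x = 0.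
  move=> n hn; apply: (sand_contra Htri) => x.
    exact: (A1 (Posz n) x).
  exact: (E2 (Posz n) (pnz n hn) x).
have Fbneg : forall n (x : Mor (shiftn D n.+1 T) T2), x = 0.
  move=> n; have [f' [g' [h' H']]] := tri_shift n.+1 Htri.
  apply: (sand_contra H') => x.
    exact: (A1 (Negz n) x).
  exact: (E2 (Negz n) erefl x).
have Fa2 : forall n, (1 < n)%N -> forall x : Mor T2 (shiftn D n T), x = 0.
  move=> n hn; have [f' [g' [h' H']]] := tri_shift n Htri.
  apply: (sand_cov H') => x.
    exact: (A2 (Posz n) (pnz2 n hn) (pn1 n hn) x).
  exact: (E2 (Posz n) (pnz2 n hn) x).
have Faneg : forall n (x : Mor (shiftn D n.+1 T2) T), x = 0.
  move=> n; apply: (sand_cov Htri) => x.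
    exact: (A2 (Negz n) erefl erefl x).
  exact: (E2 (Negz n) erefl x).
have FT1pos : forall n, (1 < n)%N -> forall x : Mor T (shiftn D n T1), x = 0.
  move=> n hn; apply: (sand_contra Htri) => x.
    exact: (E1 (Posz n) (pnz2 n hn) x).
  exact: (A2 (Posz n) (pnz2 n hn) (pn1 n hn) x).
have FT1neg : forall n (x : Mor (shiftn D n.+1 T) T1), x = 0.
  move=> n; have [f' [g' [h' H']]] := tri_shift n.+1 Htri.
  apply: (sand_contra H') => x.
    exact: (E1 (Negz n) erefl x).
  exact: (A2 (Negz n) erefl erefl x).
have Fcneg : forall n (x : Mor (shiftn D n.+1 T) T), x = 0.
  move=> n; apply: (sand_cov Htri); [exact: FT1neg | exact: Fbneg].
have Fc : forall n, (0 < n)%N -> (forall x : Mor T (shiftn D n T1), x = 0) ->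
    forall x : Mor T (shiftn D n T), x = 0.
  move=> n hn H; have [f' [g' [h' H']]] := tri_shift n Htri.
  apply: (sand_cov H'); [exact: H | exact: Fb].
have F1T : forall n, (0 < n)%N -> forall x : Mor T1 (shiftn D n T), x = 0.
  move=> n hn; have [f' [g' [h' H']]] := tri_shift n Htri.
  apply: (sand_cov H') => x.
    exact: (E1 (Posz n) (pnz n hn) x).
  exact: (A1 (Posz n) x).
have F1Tneg : forall n (x : Mor (shiftn D n.+1 T1) T), x = 0.
  move=> n; apply: (sand_cov Htri) => x.
    exact: (E1 (Negz n) erefl x).
  exact: (A1 (Negz n) x).
split.
- move=> P i1 i2 p1 p2 Hb; have [h11 h22 _ _ _] := Hb; split.
  + move=> EP beta.
    have hy : comp (- shm (Sh D) f) beta = 0 := exc_comp h11 h22 EP _.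
    exact: (cov Tr2 hy).
  + move=> LU.
    have LUT2T : forall y : Mor T2 (sh (Sh D) T), y = 0.
      move=> y.
      have hz : comp (- shm (Sh D) g) y = 0 := E2 (Posz 1) erefl _.
      have [psi Hpsi] := cov (tri_rot3 Htri) hz.
      have [h Hh] := LU psi.
      by rewrite -Hpsi -Hh compA (tri_zero Tr2) comp0m.
    have LUTT : forall y : Mor T (sh (Sh D) T), y = 0.
      move=> y.
      have hz : comp (- shm (Sh D) g) y = 0 := Fb 1%N erefl _.
      have [psi Hpsi] := cov (tri_rot3 Htri) hz.
      have hz2 : comp psi f = 0 := E1 (Posz 1) erefl _.
      have [psi' Hpsi'] := contra Htri hz2.
      have [h Hh] := LU psi'.
      by rewrite -Hpsi -Hpsi' -Hh !compA (tri_zero Tr2) !comp0m.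
    apply: (biprod_exc Hb).
    * split; last exact: Fcneg.
      by case=> [//|[|n]] hn; [exact: LUTT | exact: (Fc n.+2 hn (FT1pos n.+2 hn))].
    * by split; [exact: Fb | exact: Fbneg].
    * split; last exact: Faneg.
      by case=> [//|[|n]] hn; [exact: LUT2T | exact: (Fa2 n.+2 hn)].
    * exact: exc_van.
- move=> P i1 i2 p1 p2 Hb; have [h11 h22 _ _ _] := Hb; split.
  + move=> EP beta.
    have hy : comp beta g = 0 := exc_comp h22 h11 EP _.
    exact: (contra Tr1 hy).
  + move=> RU.
    have FT1all : forall n, (0 < n)%N -> forall x : Mor T (shiftn D n T1), x = 0.
      case=> [//|[|n]] hn; last exact: FT1pos.
      move=> y.
      have hz : comp y f = 0 := E1 (Posz 1) erefl _.
      have [psi Hpsi] := contra Htri hz.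
      have [h Hh] := RU psi.
      by rewrite -Hpsi -Hh -compA (tri_zero Tr1) compm0.
    apply: (biprod_exc Hb).
    * by split; [move=> n hn; exact: (Fc n hn (FT1all n hn)) | exact: Fcneg].
    * by split; [exact: FT1all | exact: FT1neg].
    * by split; [exact: F1T | exact: F1Tneg].
    * exact: exc_van.
Qed.
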